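(* For every $n\ge 2$, the Bigalke–Rollenske nilmanifold $X^{4n-2}$ admits balanced metrics.
   Context: Fix $n\ge2$. Let $G_n\subset GL(2n+2,\mathbb C)$ be the real nilpotent Lie group of upper triangular unipotent matrices parametrized by $x_1,\dots,x_{n-1},y_1,\dots,y_n,z_1,\dots,z_{n-1},w_1,\dots,w_n\in\mathbb C$ of the following shape (rows/columns indexed $1,\dots,2n+2$): row $1$ has entry $\bar y_1$ in column $2n+1$ and $w_1$ in column $2n+2$; for $k=2,\dots,n$, row $k$ has $\bar z_{k-1}$ in column $n+k-1$, $-x_{k-1}$ in column $n+k$ and $w_k$ in column $2n+2$; for $k=1,\dots,n$, row $n+k$ has $y_k$ in column $2n+2$; row $2n+1$ has $z_1$ in column $2n+2$; all other off-diagonal entries are $0$ and the diagonal entries are $1$. Let $\Gamma$ be the lattice of such matrices with entries in $\mathbb Z[i]$, and $X^{4n-2}=\Gamma\backslash G_n$, a compact complex manifold of complex dimension $4n-2$ with the left-invariant complex structure whose $(1,0)$-forms are spanned by the left-invariant co-frame $dx_j\,(1\le j\le n-1)$, $dy_j\,(1\le j\le n)$, $dz_j\,(1\le j\le n-1)$, $\omega_1=dw_1-\bar y_1dz_1$, $\omega_k=dw_k-\bar z_{k-1}dy_{k-1}+x_{k-1}dy_k$ $(k=2,\dots,n)$. These satisfy $d(dx_j)=d(dy_j)=d(dz_j)=0$, $\partial\omega_1=0$, $\bar\partial\omega_1=dz_1\wedge d\bar y_1$, and for $j=2,\dots,n$: $\partial\omega_j=dx_{j-1}\wedge dy_j$,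 $\bar\partial\omega_j=dy_{j-1}\wedge d\bar z_{j-1}$. A balanced metric on a complex manifold of complex dimension $N$ is a Hermitian metric whose fundamental form $\omega$ satisfies $d\omega^{N-1}=0$. *)

(* Defs.v *)
(* Left-invariant complex differential forms on the
   Bigalke--Rollenske nilmanifold, modelled as the exterior algebra over a
   numeric closed field C on the 2N generators
     phi_0 .. phi_(N-1)        (the (1,0) co-frame)
     phi_N .. phi_(2N-1)       (their conjugates: phi_(k+N) = conj phi_k)
   with N = 4n-2 and the (1,0) co-frame ordered as
     dx_1..dx_(n-1), dy_1..dy_n, dz_1..dz_(n-1), omega_1..omega_n. *)
From HB Require Import structures.
From mathcomp Require Import all_boot all_order all_algebra.
Set Implicit Arguments. Unset Strict Implicit. Unset Printing Implicit Defensive.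
Import Order.TTheory GRing.Theory Num.Theory.
Local Open Scope ring_scope.

Section Forms.
Variable C : numClosedFieldType.
Variable M : nat. (* number of real-rank generators, = 2N *)

(* a form: coefficient of e_S = e_(s1) /\ ... /\ e_(sk), s1 < ... < sk *)
Definition form := {ffun {set 'I_M} -> C}.

(* sign of e_A /\ e_B = sgn A B * e_(A u B) for disjoint A, B *)
Definition wsgn (A B : {set 'I_M}) : C :=
  (-1) ^+ #|[set p : 'I_M * 'I_M | [&& p.1 \in A, p.2 \in B & (p.2 < p.1)%N]]|.

Definition wedge (a b : form) : form :=
  [ffun S : {set 'I_M} => \sum_(A : {set 'I_M} | A \subset S)
               wsgn A (S :\: A) * a A * b (S :\: A)].

Definition form1 : form := [ffun S : {set 'I_M} => (S == set0)%:R].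

(* the generator e_k (zero if k >= M) *)
Definition gen (k : nat) : form :=
  [ffun S : {set 'I_M} => (if (insub k : option 'I_M) is Some i
             then (S == [set i])%:R else 0) : C].

Definition mono (s : seq nat) : form := foldr (fun a acc => wedge (gen a) acc) form1 s.

(* the exterior derivative, given its values on the generators,
   extended as an antiderivation *)
Fixpoint dmono (dg : nat -> form) (s : seq nat) : form :=
  match s with
  | [::] => 0
  | a :: t => wedge (dg a) (mono t) - wedge (gen a) (dmono dg t)
  end.

Definition fscale (c : C) (a : form) : form := [ffun S : {set 'I_M} => c * a S].

Definition dform (dg : nat -> form) (a : form) : form :=
  \sum_(S : {set 'I_M}) fscale (a S) (dmono dg (map val (enum S))).

Definition wpow (a : form) (k : nat) : form := iter k (wedge a) form1.

End Forms.

(* complex dimension of X^{4n-2} *)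
Definition cdim (n : nat) : nat := (4 * n - 2)%N.

Definition iX (n j : nat) : nat := j.-1.            (* dx_j,   1 <= j <= n-1 *)
Definition iY (n j : nat) : nat := (n - 2 + j)%N.       (* dy_j,   1 <= j <= n   *)
Definition iZ (n j : nat) : nat := (2 * n - 2 + j)%N.   (* dz_j,   1 <= j <= n-1 *)
Definition iW (n j : nat) : nat := (3 * n - 3 + j)%N.   (* omega_j, 1 <= j <= n  *)

Definition dgen (C : numClosedFieldType) (n : nat) (k : nat) : form C (2 * cdim n) :=
  let N := cdim n in
  let g := @gen C (2 * N) in
  let w := @wedge C (2 * N) in
  if (k < 3 * n - 2)%N then 0
  else if (k < N)%N then
    (let j := (k - (3 * n - 3))%N in
     if j == 1%N then w (g (iZ n 1)) (g (iY n 1 + N)%N)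
     else w (g (iX n j.-1)) (g (iY n j)) + w (g (iY n j.-1)) (g (iZ n j.-1 + N)%N))
  else if (k < N + (3 * n - 2))%N then 0
  else if (k < 2 * N)%N then
    (let j := (k - N - (3 * n - 3))%N in
     if j == 1%N then w (g (iZ n 1 + N)%N) (g (iY n 1))
     else w (g (iX n j.-1 + N)%N) (g (iY n j + N)%N) + w (g (iY n j.-1 + N)%N) (g (iZ n j.-1)))
  else 0.

Definition d_X (C : numClosedFieldType) (n : nat) : form C (2 * cdim n) -> form C (2 * cdim n) :=
  dform (@dgen C n).

Definition hermitian_pd (C : numClosedFieldType) (N : nat) (h : 'M[C]_N) : Prop :=
  (forall j k, h j k = (h k j)^*) /\
  (forall v : 'rV[C]_N, v != 0 ->
     0 < \sum_(j < N) \sum_(k < N) (v 0 j)^* * h j k * v 0 k).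

(* fundamental form  omega = i * sum_{j,k} h_{jk} phi_j /\ conj(phi_k) *)
Definition fund (C : numClosedFieldType) (n : nat) (h : 'M[C]_(cdim n)) : form C (2 * cdim n) :=
  \sum_(j < cdim n) \sum_(k < cdim n)
     fscale ('i * h j k) (wedge (@gen C (2 * cdim n) j) (@gen C (2 * cdim n) (k + cdim n)%N)).

Definition balanced (C : numClosedFieldType) (n : nat) (h : 'M[C]_(cdim n)) : Prop :=
  @d_X C n (wpow (@fund C n h) (cdim n).-1) = 0.

(* Main.v *)
Require Import Defs.
From HB Require Import structures.
From mathcomp Require Import all_boot all_order all_algebra zify.
Import Order.TTheory GRing.Theory Num.Theory.
Local Open Scope ring_scope.

Definition supp (C : numClosedFieldType) (M : nat) (a : Defs.form C M)
  (P : {set 'I_M} -> Prop) := forall S, a S != 0 -> P S.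
Arguments supp {C M}.

Lemma supp_weaken {C : numClosedFieldType} {M : nat} {a : Defs.form C M}
  {P Q : {set 'I_M} -> Prop} : supp a P -> (forall T, P T -> Q T) -> supp a Q.
Proof. by move=> Ha HPQ T /Ha /HPQ. Qed.

Lemma supp_zero {C : numClosedFieldType} {M : nat} {P : {set 'I_M} -> Prop} :
  supp (0 : Defs.form C M) P.
Proof. by move=> T; rewrite ffunE eqxx. Qed.

Lemma supp_add {C : numClosedFieldType} {M : nat} {a b : Defs.form C M}
  {P Q : {set 'I_M} -> Prop} : supp a P -> supp b Q ->
  supp (a + b) (fun T => P T \/ Q T).
Proof.
move=> Ha Hb T; rewrite ffunE => H.
case: (boolP (a T == 0)) => [/eqP Ha0|/Ha]; last by left.
by right; apply: Hb; rewrite Ha0 add0r in H.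
Qed.

Lemma supp_opp {C : numClosedFieldType} {M : nat} {a : Defs.form C M}
  {P : {set 'I_M} -> Prop} : supp a P -> supp (- a) P.
Proof. by move=> Ha T; rewrite ffunE oppr_eq0 => /Ha. Qed.

Lemma supp_sub {C : numClosedFieldType} {M : nat} {a b : Defs.form C M}
  {P Q : {set 'I_M} -> Prop} : supp a P -> supp b Q ->
  supp (a - b) (fun T => P T \/ Q T).
Proof. by move=> Ha Hb; apply: supp_add => //; apply: supp_opp. Qed.

Lemma supp_sum {C : numClosedFieldType} {M : nat} (I : Type) (r : seq I)
  (F : I -> Defs.form C M) (P : {set 'I_M} -> Prop) :
  (forall i, supp (F i) P) -> supp (\sum_(i <- r) F i) P.
Proof.
move=> HF; apply: (big_ind (fun a => supp a P)) => //.
  exact: supp_zero.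
move=> a b Ha Hb; apply: supp_weaken (supp_add Ha Hb) _.
by move=> T [].
Qed.

Lemma supp_fscale {C : numClosedFieldType} {M : nat} (c : C) {a : Defs.form C M}
  {P : {set 'I_M} -> Prop} : supp a P -> supp (fscale c a) P.
Proof. by move=> Ha T; rewrite ffunE mulf_eq0 negb_or => /andP[_ /Ha]. Qed.

Lemma supp_wedge {C : numClosedFieldType} {M : nat} {a b : Defs.form C M}
  {P Q : {set 'I_M} -> Prop} : supp a P -> supp b Q ->
  supp (wedge a b) (fun T => exists2 A : {set 'I_M}, A \subset T & P A /\ Q (T :\: A)).
Proof.
move=> Ha Hb T; rewrite ffunE => H.
case: (pickP (fun A : {set 'I_M} => (A \subset T) &&
   (wsgn _ A (T :\: A) * a A * b (T :\: A) != 0))) => [A /andP[sAT nz] | none].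
  rewrite !mulf_eq0 !negb_or in nz; case/andP: nz => /andP[_ nA] nB.
  by exists A => //; split; [apply: Ha | apply: Hb].
case/eqP: H; apply: big1 => A sAT.
by have := none A; rewrite sAT /= => /negbFE/eqP.
Qed.

Lemma supp_gen (C : numClosedFieldType) (M : nat) (k : nat) :
  supp (gen C M k) (fun T => exists x : 'I_M, val x = k /\ T = [set x]).
Proof.
move=> T; rewrite ffunE; case: insubP => [x _ vx | _]; last by rewrite eqxx.
by case: (T =P [set x]) => [-> _ | _]; [exists x | rewrite eqxx].
Qed.

Lemma supp_form1 (C : numClosedFieldType) (M : nat) :
  supp (form1 C M) (fun T => T = set0).
Proof. by move=> T; rewrite ffunE; case: (T =P set0) => // _; rewrite eqxx. Qed.

Lemma supp_mono (C : numClosedFieldType) (M : nat) (s : seq nat) :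
  supp (mono C M s) (fun T => forall x, (x \in T) = (val x \in s)).
Proof.
elim: s => [|a t IH].
  apply: supp_weaken (supp_form1 C M) _ => T -> x; by rewrite in_set0.
apply: supp_weaken (supp_wedge (supp_gen C M a) IH) _.
move=> T [A sAT [[y [vy eA]] HD]] x; subst A.
have: (x \in T) = (x \in T :\: [set y]) || (x == y).
  rewrite !inE; case: eqP => [->|] /=; last by rewrite orbF.
  by rewrite (subsetP sAT) // inE.
by move=> ->; rewrite HD in_cons -vy (inj_eq val_inj) orbC.
Qed.

Definition goodpair (N : nat) (k : nat) (B : {set 'I_(2 * N)}) :=
  exists x y : 'I_(2 * N), B = [set x; y] /\ x != y /\ val x != k /\ val y != k
   /\ val y != (val x + N)%N /\ val x != (val y + N)%N.

Definition Dm (N : nat) (s : seq nat) (T : {set 'I_(2 * N)}) :=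
  exists a, a \in s /\ exists B, goodpair N a B /\ B \subset T /\
    forall x, (x \in T :\: B) = (val x \in s) && (val x != a).

Lemma supp_dmono (C : numClosedFieldType) (N : nat)
  (dg : nat -> Defs.form C (2 * N)) :
  (forall a, supp (dg a) (goodpair N a)) ->
  forall s, uniq s -> supp (dmono dg s) (Dm N s).
Proof.
move=> Hdg; elim=> [|a t IH] /=; first by move=> _; exact: supp_zero.
case/andP=> nit ut.
apply: supp_weaken (supp_sub (supp_wedge (Hdg a) (supp_mono C _ t))
                     (supp_wedge (supp_gen C _ a) (IH ut))) _.
move=> T [[A sAT [gA HD]] | [A sAT [[y [vy eA]] [a' [a't [B [gB [sB HB]]]]]]]].
  exists a; split; first by rewrite mem_head.
  exists A; split=> //; split=> // x; rewrite HD in_cons.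
  case: (val x =P a) => [->|/eqP xa] /=; first by rewrite (negbTE nit).
  by rewrite andbT.
subst A.
exists a'; split; first by rewrite in_cons a't orbT.
exists B; split=> //; split.
  by apply: subset_trans sB _; apply: subsetDl.
move=> x; case: (eqVneq x y) => [->|nxy].
  rewrite vy mem_head /=.
  have -> : a != a' by apply/eqP => eaa; rewrite eaa a't in nit.
  rewrite !inE (subsetP sAT) ?set11 // andbT.
  apply/negP => yB; have := subsetP sB y yB; by rewrite !inE eqxx.
have xa : val x != a by rewrite -vy (inj_eq val_inj).
have := HB x; rewrite !inE nxy /= => ->.
by rewrite (negbTE xa).
Qed.

Lemma mem_splitA {M : nat} {T A : {set 'I_M}} (z : 'I_M) :
  A \subset T -> (z \in T) = (z \in T :\: A) || (z \in A).
Proof.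
move=> sAT; rewrite inE; case: (boolP (z \in A)) => hz /=.
  by rewrite ?orbT (subsetP sAT).
by rewrite orbF.
Qed.

Lemma pair_set {M : nat} {T : {set 'I_M}} {x y : 'I_M} :
  [set x] \subset T -> T :\: [set x] = [set y] -> T = [set x; y] /\ x != y.
Proof.
move=> sAT eD; split.
  apply/setP => z; rewrite (mem_splitA z sAT) eD !inE orbC.
  by [].
have : y \in T :\: [set x] by rewrite eD set11.
by rewrite !inE eq_sym => /andP[].
Qed.

Definition paired (N : nat) (S : {set 'I_(2 * N)}) :=
  forall x y : 'I_(2 * N), val y = (val x + N)%N -> (x \in S) = (y \in S).

Lemma supp_wedge_gen (C : numClosedFieldType) (N k p q : nat) :
  p != k -> q != k -> q != (p + N)%N -> p != (q + N)%N ->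
  supp (wedge (gen C (2 * N) p) (gen C (2 * N) q)) (goodpair N k).
Proof.
move=> pk qk qp pq.
apply: supp_weaken (supp_wedge (supp_gen C _ p) (supp_gen C _ q)) _.
move=> T [A sAT [[x [vx eA]] [y [vy eD]]]]; subst A.
have [eT nxy] := pair_set sAT eD.
by exists x, y; rewrite vx vy.
Qed.

Lemma fscale0 (C : numClosedFieldType) (M : nat) (a : Defs.form C M) :
  fscale 0 a = 0.
Proof. by apply/ffunP => T; rewrite !ffunE mul0r. Qed.

Lemma fscaler0 (C : numClosedFieldType) (M : nat) (c : C) :
  fscale c (0 : Defs.form C M) = 0.
Proof. by apply/ffunP => T; rewrite !ffunE mulr0. Qed.

Lemma supp_fund (C : numClosedFieldType) (n : nat) :
  supp (fund (1%:M : 'M[C]_(cdim n)))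
    (fun T => paired (cdim n) T /\ #|T| = 2%N).
Proof.
apply: supp_sum => j; apply: supp_sum => k; rewrite mxE.
case: (eqVneq j k) => [<-|njk]; last first.
  by rewrite mulr0 fscale0; apply: supp_zero.
apply: supp_fscale.
apply: supp_weaken (supp_wedge (supp_gen C _ j) (supp_gen C _ (j + cdim n))) _.
move=> T [A sAT [[x [vx eA]] [y [vy eD]]]]; subst A.
have [-> nxy] := pair_set sAT eD.
split; last by rewrite cards2 nxy.
move=> [a ha] [b hb] /= e; rewrite !inE -!val_eqE /= vx vy e.
move: ha hb (ltn_ord j); rewrite e /cdim; lia.
Qed.

Lemma supp_wpow (C : numClosedFieldType) (n m : nat) :
  supp (wpow (fund (1%:M : 'M[C]_(cdim n))) m)
    (fun T => paired (cdim n) T /\ #|T| = (2 * m)%N).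
Proof.
elim: m => [|m IH].
  apply: supp_weaken (supp_form1 C _) _ => T ->; split; last by rewrite cards0.
  by move=> x y _; rewrite !in_set0.
apply: supp_weaken (supp_wedge (supp_fund C n) IH) _.
move=> T [A sAT [[pA cA] [pD cD]]]; split.
  move=> x y e; rewrite (mem_splitA x sAT) (mem_splitA y sAT).
  by rewrite (pA x y e) (pD x y e).
move: cD; rewrite cardsDS // cA.
have := subset_leq_card sAT; rewrite cA; lia.
Qed.

Lemma supp_add_same {C : numClosedFieldType} {M : nat} {a b : Defs.form C M}
  {P : {set 'I_M} -> Prop} : supp a P -> supp b P -> supp (a + b) P.
Proof. by move=> Ha Hb; apply: supp_weaken (supp_add Ha Hb) _ => T []. Qed.

Lemma supp_dgen (C : numClosedFieldType) (n k : nat) : (2 <= n)%N ->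
  supp (dgen C n k) (goodpair (cdim n) k).
Proof.
move=> hn; rewrite /dgen; cbv zeta.
case: ifP => h1; first exact: supp_zero.
case: ifP => h2.
  case: ifP => h3.
    apply: supp_wedge_gen; move: h1 h2 h3; rewrite /iZ /iY /cdim; lia.
  apply: supp_add_same; apply: supp_wedge_gen;
    move: h1 h2 h3; rewrite /iZ /iY /iX /cdim; lia.
case: ifP => h4; first exact: supp_zero.
case: ifP => h5; last exact: supp_zero.
case: ifP => h3.
  apply: supp_wedge_gen; move: h1 h2 h3 h4 h5; rewrite /iZ /iY /cdim; lia.
apply: supp_add_same; apply: supp_wedge_gen;
  move: h1 h2 h3 h4 h5; rewrite /iZ /iY /iX /cdim; lia.
Qed.

Lemma Dm_false (N : nat) (S T : {set 'I_(2 * N)}) : (0 < N)%N ->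
  paired N S -> #|S| = (2 * N - 2)%N -> ~ Dm N (map val (enum S)) T.
Proof.
move=> N0 pS cS [a [aS [B [[x [y [eB [nxy [xa [ya [yx xy]]]]]]] [sBT HB]]]]].
have memS z : (val z \in map val (enum S)) = (z \in S).
  by rewrite (mem_map val_inj) mem_enum.
have notS z : z \in B -> val z != a -> z \notin S.
  move=> zB za; apply/negP => zS; have := HB z.
  by rewrite memS zS za !inE zB.
have xS : x \notin S by apply: notS => //; rewrite eB !inE eqxx.
have yS : y \notin S by apply: notS => //; rewrite eB !inE eqxx orbT.
have cC : #|~: S| = 2%N.
  have := cardsC S; rewrite card_ord cS; lia.
have sub : [set x; y] \subset ~: S.
  by apply/subsetP => z; rewrite !inE => /orP[/eqP->|/eqP->].
have c2 : #|[set x; y]| = #|~: S| by rewrite cards2 nxy cC.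
have eqC := subset_cardP c2 sub.
have inC z : z \notin S -> val z = val x \/ val z = val y.
  move=> zS; have : z \in ~: S by rewrite inE.
  by rewrite -eqC !inE => /orP[/eqP->|/eqP->]; [left|right].
case: (ltnP (val x) N) => hx.
  have hz : (val x + N < 2 * N)%N by lia.
  have := pS x (Ordinal hz) erefl; rewrite (negbTE xS) => /esym/negbT/inC /=.
  move: yx N0 => /=; lia.
have hz : (val x - N < 2 * N)%N by move: (ltn_ord x) hx => /=; lia.
have e : val x = (val (Ordinal hz) + N)%N by move: hx => /=; lia.
have := pS (Ordinal hz) x e; rewrite (negbTE xS) => /negbT/inC /=.
move: xy N0 hx => /=; lia.
Qed.

Lemma dmono_zero (C : numClosedFieldType) (n : nat) (S : {set 'I_(2 * cdim n)}) :
  (2 <= n)%N -> paired (cdim n) S -> #|S| = (2 * (cdim n).-1)%N ->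
  dmono (dgen C n) (map val (enum S)) = 0.
Proof.
move=> hn pS cS; apply/ffunP => T; rewrite [RHS]ffunE; apply/eqP.
have u : uniq (map val (enum S)) by rewrite (map_inj_uniq val_inj) enum_uniq.
have Hs := @supp_dmono C (cdim n) (dgen C n) (fun k => supp_dgen C n k hn) _ u.
apply: contraT => /Hs H; exfalso.
apply: (@Dm_false (cdim n) S T _ pS _ H).
  rewrite /cdim; lia.
rewrite cS /cdim; lia.
Qed.

Theorem theorem3p3 (n : nat) (hn : (2 <= n)%N) (C : numClosedFieldType) :
  exists h : 'M[C]_(cdim n), hermitian_pd h /\ balanced h.
Proof.
exists 1%:M; split.
  split.
    by move=> j k; rewrite !mxE conjC_nat eq_sym.
  move=> v hv.
  have -> : \sum_(j < cdim n) \sum_(k < cdim n) (v 0 j)^* * (1%:M : 'M[C]_(cdim n)) j k * v 0 k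
      = \sum_(j < cdim n) `|v 0 j| ^+ 2.
    apply: eq_bigr => j _; rewrite (bigD1 j) //= mxE eqxx mulr1 big1 ?addr0.
      by rewrite normCK mulrC.
    by move=> k /negbTE kj; rewrite mxE eq_sym kj mulr0 mul0r.
  case: (pickP (fun j => v 0 j != 0)) => [j Hj | H]; last first.
    case/eqP: hv; apply/rowP => j; rewrite mxE.
    by have /negbFE/eqP := H j.
  rewrite (bigD1 j) //=.
  rewrite addrC; apply: ltr_pwDr; first by rewrite exprn_gt0 // normr_gt0.
  by apply: sumr_ge0 => i _; rewrite exprn_ge0.
rewrite /balanced /d_X /dform; apply: big1 => S _.
case: (eqVneq (wpow (fund (1%:M : 'M[C]_(cdim n))) (cdim n).-1 S) 0) => [->|nz].
  exact: fscale0.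
have [pS cS] := supp_wpow C n (cdim n).-1 S nz.
by rewrite dmono_zero // fscaler0.
Qed.
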